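(* Let $R,S,R',S'$ be rings whose only idempotents are $0$ and $1$, $M$ an $R$-$S$-bimodule, $N$ an $S$-$R$-bimodule, $M'$ an $R'$-$S'$-bimodule and $N'$ an $S'$-$R'$-bimodule. Let $T=\left[\begin{smallmatrix} R & M\\ N & S\end{smallmatrix}\right]$ and $T'=\left[\begin{smallmatrix} R' & M'\\ N' & S'\end{smallmatrix}\right]$ be the associated Morita context rings with both Morita maps equal to zero. Then $\mathrm{Iso}_0(T,T')=\mathrm{Iso}(T,T')$, i.e. every ring isomorphism $T\to T'$ lies in $\mathrm{Iso}_0^0(T,T')\cup\mathrm{Iso}_0^1(T,T')$.
   Context: All rings have an identity $1\neq 0$. With zero Morita maps, $T$ is the set of formal matrices $\left[\begin{smallmatrix} r & m\\ n & s\end{smallmatrix}\right]$ ($r\in R,m\in M,n\in N,s\in S$) with entrywise addition and product $\left[\begin{smallmatrix} r & m\\ n & s\end{smallmatrix}\right]\left[\begin{smallmatrix} r' & m'\\ n' & s'\end{smallmatrix}\right]=\left[\begin{smallmatrix} rr' & rm'+ms'\\ nr'+sn' & ss'\end{smallmatrix}\right]$; similarly for $T'$. $\mathrm{Iso}(T,T')$ is the set of all ring isomorphisms $T\to T'$. $\mathrm{Iso}_0^0(T,T')$ is the set of maps $\phi\left(\left[\begin{smallmatrix} r & m\\ n & s\end{smallmatrix}\right]\right)=\left[\begin{smallmatrix}\gamma(r) & \gamma(r)m'_0-m'_0\delta(s)+u(m)\\ n'_0\gamma(r)-\delta(s)n'_0+v(n) & \delta(s)\end{smallmatrix}\right]$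 where $\gamma:R\to R'$, $\delta:S\to S'$ are ring isomorphisms, $u:M\to M'$ and $v:N\to N'$ are additive bijections with $u(rms)=\gamma(r)u(m)\delta(s)$ and $v(snr)=\delta(s)v(n)\gamma(r)$, and $m'_0\in M'$, $n'_0\in N'$ are arbitrary (the remaining defining conditions are automatic when all Morita maps are zero). $\mathrm{Iso}_0^1(T,T')$ is the set of maps $\psi\left(\left[\begin{smallmatrix} r & m\\ n & s\end{smallmatrix}\right]\right)=\left[\begin{smallmatrix}\sigma(s) & m'_*\rho(r)-\sigma(s)m'_*+\nu(n)\\ \rho(r)n'_*-n'_*\sigma(s)+\mu(m) & \rho(r)\end{smallmatrix}\right]$ where $\rho:R\to S'$, $\sigma:S\to R'$ are ring isomorphisms, $\mu:M\to N'$, $\nu:N\to M'$ are additive bijections with $\mu(rms)=\rho(r)\mu(m)\sigma(s)$ and $\nu(snr)=\sigma(s)\nu(n)\rho(r)$, and $m'_*\in M'$, $n'_*\in N'$ are arbitrary. $\mathrm{Iso}_0(T,T')=\mathrm{Iso}_0^0(T,T')\cup\mathrm{Iso}_0^1(T,T')$. *)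

(* Defs.v *)
From HB Require Import structures.
From mathcomp Require Import all_boot all_order all_algebra.
Set Implicit Arguments. Unset Strict Implicit. Unset Printing Implicit Defensive.
Import GRing.Theory.
Local Open Scope ring_scope.

Record bimod (R S : nzRingType) := Bimod {
  bm_car :> zmodType;
  lact : R -> bm_car -> bm_car;
  ract : bm_car -> S -> bm_car;
  lactDl : forall r r' m, lact (r + r') m = lact r m + lact r' m;
  lactDr : forall r m m', lact r (m + m') = lact r m + lact r m';
  lactA : forall r r' m, lact (r * r') m = lact r (lact r' m);
  lact1 : forall m, lact 1 m = m;
  ractDl : forall m m' s, ract (m + m') s = ract m s + ract m' s;
  ractDr : forall m s s', ract m (s + s') = ract m s + ract m s';
  ractA : forall m s s', ract m (s * s') = ract (ract m s) s';
  ract1 : forall m, ract m 1 = m;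
  lractA : forall r m s, ract (lact r m) s = lact r (ract m s)
}.

Definition only_trivial_idempotents (R : nzRingType) : Prop :=
  forall e : R, e * e = e -> e = 0 \/ e = 1.

(* Elements of the Morita context ring T = [R M; N S] (zero Morita maps). *)
Record mctx (R S : nzRingType) (M : bimod R S) (N : bimod S R) := MC {
  e11 : R; e12 : M; e21 : N; e22 : S }.

Section MoritaOps.
Variables (R S : nzRingType) (M : bimod R S) (N : bimod S R).

Definition mc_add (x y : mctx M N) : mctx M N :=
  MC (e11 x + e11 y) (e12 x + e12 y) (e21 x + e21 y) (e22 x + e22 y).

(* [r m; n s][r' m'; n' s'] = [rr', rm' + ms'; nr' + sn', ss'] *)
Definition mc_mul (x y : mctx M N) : mctx M N :=
  MC (e11 x * e11 y)
     (lact (e11 x) (e12 y) + ract (e12 x) (e22 y))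
     (ract (e21 x) (e11 y) + lact (e22 x) (e21 y))
     (e22 x * e22 y).

Definition mc_one : mctx M N := MC 1 0 0 1.
End MoritaOps.

Definition ring_iso (A B : nzRingType) (f : A -> B) : Prop :=
  bijective f /\ (forall a b, f (a + b) = f a + f b) /\
  (forall a b, f (a * b) = f a * f b) /\ f 1 = 1.

Definition mc_ring_iso (R S R' S' : nzRingType)
  (M : bimod R S) (N : bimod S R) (M' : bimod R' S') (N' : bimod S' R')
  (f : mctx M N -> mctx M' N') : Prop :=
  bijective f /\ (forall x y, f (mc_add x y) = mc_add (f x) (f y)) /\
  (forall x y, f (mc_mul x y) = mc_mul (f x) (f y)) /\
  f (mc_one M N) = mc_one M' N'.

Definition Iso00 (R S R' S' : nzRingType)
  (M : bimod R S) (N : bimod S R) (M' : bimod R' S') (N' : bimod S' R')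
  (phi : mctx M N -> mctx M' N') : Prop :=
  exists (gamma : R -> R') (delta : S -> S') (u : M -> M') (v : N -> N')
         (m0 : M') (n0 : N'),
    ring_iso gamma /\ ring_iso delta /\
        bijective u /\ (forall m m', u (m + m') = u m + u m') /\
        bijective v /\ (forall n n', v (n + n') = v n + v n') /\
        (forall r m s, u (ract (lact r m) s) = ract (lact (gamma r) (u m)) (delta s)) /\
        (forall s n r, v (ract (lact s n) r) = ract (lact (delta s) (v n)) (gamma r)) /\
        (forall x : mctx M N,
          phi x = MC (gamma (e11 x))
                     (lact (gamma (e11 x)) m0 - ract m0 (delta (e22 x)) + u (e12 x))
                     (ract n0 (gamma (e11 x)) - lact (delta (e22 x)) n0 + v (e21 x))
                     (delta (e22 x))).

Definition Iso01 (R S R' S' : nzRingType)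
  (M : bimod R S) (N : bimod S R) (M' : bimod R' S') (N' : bimod S' R')
  (psi : mctx M N -> mctx M' N') : Prop :=
  exists (rho : R -> S') (sigma : S -> R') (mu : M -> N') (nu : N -> M')
         (ms : M') (ns : N'),
    ring_iso rho /\ ring_iso sigma /\
        bijective mu /\ (forall m m', mu (m + m') = mu m + mu m') /\
        bijective nu /\ (forall n n', nu (n + n') = nu n + nu n') /\
        (forall r m s, mu (ract (lact r m) s) = ract (lact (rho r) (mu m)) (sigma s)) /\
        (forall s n r, nu (ract (lact s n) r) = ract (lact (sigma s) (nu n)) (rho r)) /\
        (forall x : mctx M N,
          psi x = MC (sigma (e22 x))
                     (ract ms (rho (e11 x)) - lact (sigma (e22 x)) ms + nu (e21 x))
                     (lact (rho (e11 x)) ns - ract ns (sigma (e22 x)) + mu (e12 x))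
                     (rho (e11 x))).

(* Main.v *)
Require Import Defs.
From HB Require Import structures.
From mathcomp Require Import all_boot all_order all_algebra.
Set Implicit Arguments. Unset Strict Implicit. Unset Printing Implicit Defensive.
Import GRing.Theory.
Local Open Scope ring_scope.

Lemma addf0 (U V : zmodType) (f : U -> V) :
  (forall x y, f (x + y) = f x + f y) -> f 0 = 0.
Proof. by move=> H; apply: (@addrI _ (f 0)); rewrite -H !addr0. Qed.

Lemma addfN (U V : zmodType) (f : U -> V) :
  (forall x y, f (x + y) = f x + f y) -> forall x, f (- x) = - f x.
Proof.
move=> H x; apply: (@addrI _ (f x)); rewrite -H !subrr; exact: addf0.
Qed.

Lemma dbl0 (V : zmodType) (x : V) : x = x + x -> x = 0.
Proof. by move=> H; apply: (@addrI _ x); rewrite addr0 -H. Qed.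

Section BM.
Variables (R S : nzRingType) (M : bimod R S).
Lemma lact0l (m : M) : lact 0 m = 0.
Proof. by apply: dbl0; rewrite -lactDl addr0. Qed.
Lemma lact0r (r : R) : lact r (0 : M) = 0.
Proof. by apply: dbl0; rewrite -lactDr addr0. Qed.
Lemma ract0l (s : S) : ract (0 : M) s = 0.
Proof. by apply: dbl0; rewrite -ractDl addr0. Qed.
Lemma ract0r (m : M) : ract m 0 = 0.
Proof. by apply: dbl0; rewrite -ractDr addr0. Qed.
Lemma lactNl (r : R) (m : M) : lact (- r) m = - lact r m.
Proof. exact: (@addfN R M (fun r => lact r m) (fun x y => lactDl x y m) r). Qed.
Lemma lactNr (r : R) (m : M) : lact r (- m) = - lact r m.
Proof. exact: (@addfN M M (lact r) (lactDr r) m). Qed.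
Lemma ractNl (s : S) (m : M) : ract (- m) s = - ract m s.
Proof. exact: (@addfN M M (fun m => ract m s) (fun x y => ractDl x y s) m). Qed.
Lemma ractNr (s : S) (m : M) : ract m (- s) = - ract m s.
Proof. exact: (@addfN S M (ract m) (ractDr m) s). Qed.
Lemma lactBr (r : R) (m m' : M) : lact r (m - m') = lact r m - lact r m'.
Proof. by rewrite lactDr lactNr. Qed.
Lemma ractBl (s : S) (m m' : M) : ract (m - m') s = ract m s - ract m' s.
Proof. by rewrite ractDl ractNl. Qed.
End BM.

Definition simpl0 := (mul1r, mulr1, mul0r, mulr0, lact1, ract1, lact0l, lact0r,
  ract0l, ract0r, addr0, add0r, subr0, sub0r, oppr0).

Section Prod.
Variables (R S : nzRingType) (M : bimod R S) (N : bimod S R).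
Implicit Types (a : M) (b : N) (y : mctx M N).

Lemma mc_eta y : y = MC (e11 y) (e12 y) (e21 y) (e22 y).
Proof. by case: y. Qed.

Lemma P11 a b y : mc_mul (mc_mul (MC 1 a b 0) y) (MC 1 a b 0) =
  MC (e11 y) (lact (e11 y) a) (ract b (e11 y)) 0.
Proof. by case: y => p q t w; rewrite /mc_mul /= !simpl0. Qed.

Lemma P22 a b y : mc_mul (mc_mul (MC 0 a b 1) y) (MC 0 a b 1) =
  MC 0 (ract a (e22 y)) (lact (e22 y) b) (e22 y).
Proof. by case: y => p q t w; rewrite /mc_mul /= !simpl0. Qed.

Lemma Q12 a b a' b' y :
  let z := mc_mul (mc_mul (MC 1 a b 0) y) (MC 0 a' b' 1) in
  [/\ e11 z = 0, e21 z = 0 & e22 z = 0].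
Proof. by case: y => p q t w; rewrite /mc_mul /= !simpl0. Qed.

Lemma Q21 a b a' b' y :
  let z := mc_mul (mc_mul (MC 0 a b 1) y) (MC 1 a' b' 0) in
  [/\ e11 z = 0, e12 z = 0 & e22 z = 0].
Proof. by case: y => p q t w; rewrite /mc_mul /= !simpl0. Qed.

Lemma decA (r : R) : (MC r 0 0 0 : mctx M N) =
  mc_mul (mc_mul (MC 1 0 0 0) (MC r 0 0 0)) (MC 1 0 0 0).
Proof. by rewrite /mc_mul /= !simpl0. Qed.
Lemma decB (s : S) : (MC 0 0 0 s : mctx M N) =
  mc_mul (mc_mul (MC 0 0 0 1) (MC 0 0 0 s)) (MC 0 0 0 1).
Proof. by rewrite /mc_mul /= !simpl0. Qed.
Lemma decC (m : M) : (MC 0 m 0 0 : mctx M N) =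
  mc_mul (mc_mul (MC 1 0 0 0) (MC 0 m 0 0)) (MC 0 0 0 1).
Proof. by rewrite /mc_mul /= !simpl0. Qed.
Lemma decD (n : N) : (MC 0 0 n 0 : mctx M N) =
  mc_mul (mc_mul (MC 0 0 0 1) (MC 0 0 n 0)) (MC 1 0 0 0).
Proof. by rewrite /mc_mul /= !simpl0. Qed.
Lemma decX r m n s : (MC r m n s : mctx M N) =
  mc_add (mc_add (MC r 0 0 0) (MC 0 0 0 s)) (mc_add (MC 0 m 0 0) (MC 0 0 n 0)).
Proof. by rewrite /mc_add /= !simpl0. Qed.
End Prod.

Section Fwd.
Variables (R S R' S' : nzRingType) (M : bimod R S) (N : bimod S R)
  (M' : bimod R' S') (N' : bimod S' R').
Variables (f : mctx M N -> mctx M' N') (g : mctx M' N' -> mctx M N).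
Hypotheses (fK : cancel f g) (gK : cancel g f)
  (fadd : forall x y, f (mc_add x y) = mc_add (f x) (f y))
  (fmul : forall x y, f (mc_mul x y) = mc_mul (f x) (f y))
  (f1 : f (mc_one M N) = mc_one M' N').

Lemma finj : injective f. Proof. exact: can_inj fK. Qed.

Lemma f0 : f (MC 0 0 0 0) = MC 0 0 0 0.
Proof.
have := fadd (MC 0 0 0 0) (MC 0 0 0 0); rewrite {1}/mc_add /= !addr0.
case: (f _) => a b c d; rewrite /mc_add /= => -[ha hb hc hd].
by rewrite -(dbl0 ha) -(dbl0 hb) -(dbl0 hc) -(dbl0 hd).
Qed.

Lemma fE22 a b : f (MC 1 0 0 0) = MC 1 a b 0 -> f (MC 0 0 0 1) = MC 0 (-a) (-b) 1.
Proof.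
move=> He; have := fadd (MC 1 0 0 0) (MC 0 0 0 1).
rewrite {1}/mc_add /= !simpl0 -[MC 1 0 0 1]/(mc_one M N) f1 He.
case: (f _) => c0 c1 c2 c3; rewrite /mc_add /mc_one /= => -[h0 h1 h2 h3].
congr MC.
- by apply: (@addrI _ 1); rewrite -h0 addr0.
- by rewrite -[c1](addKr a) -h1 addr0.
- by rewrite -[c2](addKr b) -h2 addr0.
- by rewrite h3 add0r.
Qed.

Lemma fE11 a b : f (MC 0 0 0 1) = MC 0 a b 1 -> f (MC 1 0 0 0) = MC 1 (-a) (-b) 0.
Proof.
move=> He; have := fadd (MC 1 0 0 0) (MC 0 0 0 1).
rewrite {1}/mc_add /= !simpl0 -[MC 1 0 0 1]/(mc_one M N) f1 He.
case: (f _) => c0 c1 c2 c3; rewrite /mc_add /mc_one /= => -[h0 h1 h2 h3].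
congr MC.
- by rewrite h0 addr0.
- by rewrite -[c1](addrK a) -h1 sub0r.
- by rewrite -[c2](addrK b) -h2 sub0r.
- by apply: (@addrI _ 1); rewrite addrC -h3 addr0.
Qed.

Section Case1.
Variables (a : M') (b : N').
Hypothesis He : f (MC 1 0 0 0) = MC 1 a b 0.

Definition gam r := e11 (f (MC r 0 0 0)).
Definition del s := e22 (f (MC 0 0 0 s)).
Definition uu m := e12 (f (MC 0 m 0 0)).
Definition vv n := e21 (f (MC 0 0 n 0)).

Lemma c1A r : f (MC r 0 0 0) = MC (gam r) (lact (gam r) a) (ract b (gam r)) 0.
Proof. by rewrite {1}decA !fmul He P11. Qed.

Lemma c1B s : f (MC 0 0 0 s) = MC 0 (ract (-a) (del s)) (lact (del s) (-b)) (del s).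
Proof. by rewrite {1}decB !fmul (fE22 He) P22. Qed.

Lemma c1C m : f (MC 0 m 0 0) = MC 0 (uu m) 0 0.
Proof.
have E' : f (MC 0 m 0 0) = mc_mul (mc_mul (MC 1 a b 0) (f (MC 0 m 0 0))) (MC 0 (-a) (-b) 1).
  by rewrite -He -(fE22 He) -!fmul -decC.
have [h1 h2 h3] := Q12 a b (-a) (-b) (f (MC 0 m 0 0)).
rewrite -E' in h1 h2 h3.
by rewrite [LHS]mc_eta h1 h2 h3.
Qed.

Lemma c1D n : f (MC 0 0 n 0) = MC 0 0 (vv n) 0.
Proof.
have E' : f (MC 0 0 n 0) = mc_mul (mc_mul (MC 0 (-a) (-b) 1) (f (MC 0 0 n 0))) (MC 1 a b 0).
  by rewrite -He -(fE22 He) -!fmul -decD.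
have [h1 h2 h3] := Q21 (-a) (-b) a b (f (MC 0 0 n 0)).
rewrite -E' in h1 h2 h3.
by rewrite [LHS]mc_eta h1 h2 h3.
Qed.

Lemma c1F x : f x = MC (gam (e11 x))
  (lact (gam (e11 x)) a - ract a (del (e22 x)) + uu (e12 x))
  (ract b (gam (e11 x)) - lact (del (e22 x)) b + vv (e21 x)) (del (e22 x)).
Proof.
case: x => r m n s; rewrite decX !fadd c1A c1B c1C c1D /mc_add /=.
by rewrite ractNl lactNr !simpl0.
Qed.

Lemma c1F11 x : e11 (f x) = gam (e11 x). Proof. by rewrite c1F. Qed.
Lemma c1F22 x : e22 (f x) = del (e22 x). Proof. by rewrite c1F. Qed.

Lemma gamD r r' : gam (r + r') = gam r + gam r'.
Proof.
have := congr1 (@e11 _ _ _ _) (fadd (MC r 0 0 0) (MC r' 0 0 0)).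
by rewrite c1F11 /mc_add /= !c1F11.
Qed.
Lemma delD s s' : del (s + s') = del s + del s'.
Proof.
have := congr1 (@e22 _ _ _ _) (fadd (MC 0 0 0 s) (MC 0 0 0 s')).
by rewrite c1F22 /mc_add /= !c1F22.
Qed.
Lemma gamM r r' : gam (r * r') = gam r * gam r'.
Proof.
have := congr1 (@e11 _ _ _ _) (fmul (MC r 0 0 0) (MC r' 0 0 0)).
by rewrite c1F11 /mc_mul /= !c1F11.
Qed.
Lemma delM s s' : del (s * s') = del s * del s'.
Proof.
have := congr1 (@e22 _ _ _ _) (fmul (MC 0 0 0 s) (MC 0 0 0 s')).
by rewrite c1F22 /mc_mul /= !c1F22.
Qed.
Lemma gam1 : gam 1 = 1.
Proof. by have := congr1 (@e11 _ _ _ _) f1; rewrite c1F11. Qed.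
Lemma del1 : del 1 = 1.
Proof. by have := congr1 (@e22 _ _ _ _) f1; rewrite c1F22. Qed.
Lemma gam0 : gam 0 = 0. Proof. exact: addf0 gamD. Qed.
Lemma del0 : del 0 = 0. Proof. exact: addf0 delD. Qed.

Lemma c1F12 x : e12 (f x) = lact (gam (e11 x)) a - ract a (del (e22 x)) + uu (e12 x).
Proof. by rewrite c1F. Qed.
Lemma c1F21 x : e21 (f x) = ract b (gam (e11 x)) - lact (del (e22 x)) b + vv (e21 x).
Proof. by rewrite c1F. Qed.

Lemma uuD m m' : uu (m + m') = uu m + uu m'.
Proof.
have := congr1 (@e12 _ _ _ _) (fadd (MC 0 m 0 0) (MC 0 m' 0 0)).
by rewrite c1F12 /mc_add /= !c1F12 /= !addr0 gam0 del0 !simpl0.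
Qed.
Lemma vvD n n' : vv (n + n') = vv n + vv n'.
Proof.
have := congr1 (@e21 _ _ _ _) (fadd (MC 0 0 n 0) (MC 0 0 n' 0)).
by rewrite c1F21 /mc_add /= !c1F21 /= !addr0 gam0 del0 !simpl0.
Qed.

Lemma gam_bij : bijective gam.
Proof.
pose h p := e11 (g (MC p 0 0 0)).
have hK : cancel h gam by move=> p; rewrite /h -c1F11 gK.
have ginj : injective gam.
  move=> r r' E; have : f (MC r 0 0 0) = f (MC r' 0 0 0) by rewrite !c1A E.
  by move/finj => [].
exact: (Bijective (inj_can_sym hK ginj) hK).
Qed.
Lemma del_bij : bijective del.
Proof.
pose h p := e22 (g (MC 0 0 0 p)).
have hK : cancel h del by move=> p; rewrite /h -c1F22 gK.
have ginj : injective del.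
  move=> r r' E; have : f (MC 0 0 0 r) = f (MC 0 0 0 r') by rewrite !c1B E.
  by move/finj => [].
exact: (Bijective (inj_can_sym hK ginj) hK).
Qed.
Lemma uu_bij : bijective uu.
Proof.
pose h p := e12 (g (MC 0 p 0 0)).
have hK : cancel h uu.
  move=> p; have E := gK (MC 0 p 0 0).
  have h11 := congr1 (@e11 _ _ _ _) E; have h22 := congr1 (@e22 _ _ _ _) E.
  have h12 := congr1 (@e12 _ _ _ _) E.
  rewrite c1F11 in h11; rewrite c1F22 in h22; rewrite c1F12 h11 h22 in h12.
  by rewrite /= !simpl0 in h12.
have ginj : injective uu.
  move=> r r' E; have : f (MC 0 r 0 0) = f (MC 0 r' 0 0) by rewrite !c1C E.
  by move/finj => [].
exact: (Bijective (inj_can_sym hK ginj) hK).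
Qed.
Lemma vv_bij : bijective vv.
Proof.
pose h p := e21 (g (MC 0 0 p 0)).
have hK : cancel h vv.
  move=> p; have E := gK (MC 0 0 p 0).
  have h11 := congr1 (@e11 _ _ _ _) E; have h22 := congr1 (@e22 _ _ _ _) E.
  have h12 := congr1 (@e21 _ _ _ _) E.
  rewrite c1F11 in h11; rewrite c1F22 in h22; rewrite c1F21 h11 h22 in h12.
  by rewrite /= !simpl0 in h12.
have ginj : injective vv.
  move=> r r' E; have : f (MC 0 0 r 0) = f (MC 0 0 r' 0) by rewrite !c1D E.
  by move/finj => [].
exact: (Bijective (inj_can_sym hK ginj) hK).
Qed.

Lemma uu_compat r m s :
  uu (ract (lact r m) s) = ract (lact (gam r) (uu m)) (del s).
Proof.
have := congr1 (@e12 _ _ _ _)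
  (fmul (mc_mul (MC r 0 0 0) (MC 0 m 0 0)) (MC 0 0 0 s)).
rewrite c1F12 fmul /mc_mul /= c1A c1B c1C /= !simpl0 gam0 del0 !simpl0.
by move=> ->.
Qed.
Lemma vv_compat s n r :
  vv (ract (lact s n) r) = ract (lact (del s) (vv n)) (gam r).
Proof.
have := congr1 (@e21 _ _ _ _)
  (fmul (mc_mul (MC 0 0 0 s) (MC 0 0 n 0)) (MC r 0 0 0)).
rewrite c1F21 fmul /mc_mul /= c1A c1B c1D /= !simpl0 gam0 del0 !simpl0.
by move=> ->.
Qed.

Lemma case1_iso : Iso00 f.
Proof.
exists gam, del, uu, vv, a, b.
split; first by split; [exact: gam_bij | split; [exact: gamD | split; [exact: gamM | exact: gam1]]].
split; first by split; [exact: del_bij | split; [exact: delD | split; [exact: delM | exact: del1]]].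
do 6 (split; first by [exact: uu_bij | exact: uuD | exact: vv_bij | exact: vvD |
   exact: uu_compat | exact: vv_compat]).
exact: c1F.
Qed.
End Case1.

Lemma fE22b a b : f (MC 1 0 0 0) = MC 0 a b 1 -> f (MC 0 0 0 1) = MC 1 (-a) (-b) 0.
Proof.
move=> He; have := fadd (MC 1 0 0 0) (MC 0 0 0 1).
rewrite {1}/mc_add /= !simpl0 -[MC 1 0 0 1]/(mc_one M N) f1 He.
case: (f _) => c0 c1 c2 c3; rewrite /mc_add /mc_one /= => -[h0 h1 h2 h3].
congr MC.
- by rewrite h0 add0r.
- by rewrite -[c1](addKr a) -h1 addr0.
- by rewrite -[c2](addKr b) -h2 addr0.
- by apply: (@addrI _ 1); rewrite -h3 addr0.
Qed.

Section Case2.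
Variables (a : M') (b : N').
Hypothesis He : f (MC 1 0 0 0) = MC 0 a b 1.

Definition rho r := e22 (f (MC r 0 0 0)).
Definition sig s := e11 (f (MC 0 0 0 s)).
Definition mu m := e21 (f (MC 0 m 0 0)).
Definition nu n := e12 (f (MC 0 0 n 0)).

Lemma c2A r : f (MC r 0 0 0) = MC 0 (ract a (rho r)) (lact (rho r) b) (rho r).
Proof. by rewrite {1}decA !fmul He P22. Qed.

Lemma c2B s : f (MC 0 0 0 s) = MC (sig s) (lact (sig s) (-a)) (ract (-b) (sig s)) 0.
Proof. by rewrite {1}decB !fmul (fE22b He) P11. Qed.

Lemma c2C m : f (MC 0 m 0 0) = MC 0 0 (mu m) 0.
Proof.
have E' : f (MC 0 m 0 0) = mc_mul (mc_mul (MC 0 a b 1) (f (MC 0 m 0 0))) (MC 1 (-a) (-b) 0).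
  by rewrite -He -(fE22b He) -!fmul -decC.
have [h1 h2 h3] := Q21 a b (-a) (-b) (f (MC 0 m 0 0)).
rewrite -E' in h1 h2 h3.
by rewrite [LHS]mc_eta h1 h2 h3.
Qed.

Lemma c2D n : f (MC 0 0 n 0) = MC 0 (nu n) 0 0.
Proof.
have E' : f (MC 0 0 n 0) = mc_mul (mc_mul (MC 1 (-a) (-b) 0) (f (MC 0 0 n 0))) (MC 0 a b 1).
  by rewrite -He -(fE22b He) -!fmul -decD.
have [h1 h2 h3] := Q12 (-a) (-b) a b (f (MC 0 0 n 0)).
rewrite -E' in h1 h2 h3.
by rewrite [LHS]mc_eta h1 h2 h3.
Qed.

Lemma c2F x : f x = MC (sig (e22 x))
  (ract a (rho (e11 x)) - lact (sig (e22 x)) a + nu (e21 x))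
  (lact (rho (e11 x)) b - ract b (sig (e22 x)) + mu (e12 x)) (rho (e11 x)).
Proof.
case: x => r m n s; rewrite decX !fadd c2A c2B c2C c2D /mc_add /=.
by rewrite ractNl lactNr !simpl0.
Qed.

Lemma c2F11 x : e11 (f x) = sig (e22 x). Proof. by rewrite c2F. Qed.
Lemma c2F22 x : e22 (f x) = rho (e11 x). Proof. by rewrite c2F. Qed.
Lemma c2F12 x : e12 (f x) = ract a (rho (e11 x)) - lact (sig (e22 x)) a + nu (e21 x).
Proof. by rewrite c2F. Qed.
Lemma c2F21 x : e21 (f x) = lact (rho (e11 x)) b - ract b (sig (e22 x)) + mu (e12 x).
Proof. by rewrite c2F. Qed.

Lemma rhoD r r' : rho (r + r') = rho r + rho r'.
Proof.
have := congr1 (@e22 _ _ _ _) (fadd (MC r 0 0 0) (MC r' 0 0 0)).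
by rewrite c2F22 /mc_add /= !c2F22.
Qed.
Lemma sigD s s' : sig (s + s') = sig s + sig s'.
Proof.
have := congr1 (@e11 _ _ _ _) (fadd (MC 0 0 0 s) (MC 0 0 0 s')).
by rewrite c2F11 /mc_add /= !c2F11.
Qed.
Lemma rhoM r r' : rho (r * r') = rho r * rho r'.
Proof.
have := congr1 (@e22 _ _ _ _) (fmul (MC r 0 0 0) (MC r' 0 0 0)).
by rewrite c2F22 /mc_mul /= !c2F22.
Qed.
Lemma sigM s s' : sig (s * s') = sig s * sig s'.
Proof.
have := congr1 (@e11 _ _ _ _) (fmul (MC 0 0 0 s) (MC 0 0 0 s')).
by rewrite c2F11 /mc_mul /= !c2F11.
Qed.
Lemma rho1 : rho 1 = 1.
Proof. by have := congr1 (@e22 _ _ _ _) f1; rewrite c2F22. Qed.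
Lemma sig1 : sig 1 = 1.
Proof. by have := congr1 (@e11 _ _ _ _) f1; rewrite c2F11. Qed.
Lemma rho0 : rho 0 = 0. Proof. exact: addf0 rhoD. Qed.
Lemma sig0 : sig 0 = 0. Proof. exact: addf0 sigD. Qed.

Lemma muD m m' : mu (m + m') = mu m + mu m'.
Proof.
have := congr1 (@e21 _ _ _ _) (fadd (MC 0 m 0 0) (MC 0 m' 0 0)).
by rewrite c2F21 /mc_add /= !c2F21 /= !addr0 rho0 sig0 !simpl0.
Qed.
Lemma nuD n n' : nu (n + n') = nu n + nu n'.
Proof.
have := congr1 (@e12 _ _ _ _) (fadd (MC 0 0 n 0) (MC 0 0 n' 0)).
by rewrite c2F12 /mc_add /= !c2F12 /= !addr0 rho0 sig0 !simpl0.
Qed.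

Lemma rho_bij : bijective rho.
Proof.
pose h p := e11 (g (MC 0 0 0 p)).
have hK : cancel h rho by move=> p; rewrite /h -c2F22 gK.
have ginj : injective rho.
  move=> r r' E; have : f (MC r 0 0 0) = f (MC r' 0 0 0) by rewrite !c2A E.
  by move/finj => [].
exact: (Bijective (inj_can_sym hK ginj) hK).
Qed.
Lemma sig_bij : bijective sig.
Proof.
pose h p := e22 (g (MC p 0 0 0)).
have hK : cancel h sig by move=> p; rewrite /h -c2F11 gK.
have ginj : injective sig.
  move=> r r' E; have : f (MC 0 0 0 r) = f (MC 0 0 0 r') by rewrite !c2B E.
  by move/finj => [].
exact: (Bijective (inj_can_sym hK ginj) hK).
Qed.
Lemma mu_bij : bijective mu.
Proof.
pose h p := e12 (g (MC 0 0 p 0)).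
have hK : cancel h mu.
  move=> p; have E := gK (MC 0 0 p 0).
  have h11 := congr1 (@e11 _ _ _ _) E; have h22 := congr1 (@e22 _ _ _ _) E.
  have h12 := congr1 (@e21 _ _ _ _) E.
  rewrite c2F11 in h11; rewrite c2F22 in h22; rewrite c2F21 h11 h22 in h12.
  by rewrite /= !simpl0 in h12.
have ginj : injective mu.
  move=> r r' E; have : f (MC 0 r 0 0) = f (MC 0 r' 0 0) by rewrite !c2C E.
  by move/finj => [].
exact: (Bijective (inj_can_sym hK ginj) hK).
Qed.
Lemma nu_bij : bijective nu.
Proof.
pose h p := e21 (g (MC 0 p 0 0)).
have hK : cancel h nu.
  move=> p; have E := gK (MC 0 p 0 0).
  have h11 := congr1 (@e11 _ _ _ _) E; have h22 := congr1 (@e22 _ _ _ _) E.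
  have h12 := congr1 (@e12 _ _ _ _) E.
  rewrite c2F11 in h11; rewrite c2F22 in h22; rewrite c2F12 h11 h22 in h12.
  by rewrite /= !simpl0 in h12.
have ginj : injective nu.
  move=> r r' E; have : f (MC 0 0 r 0) = f (MC 0 0 r' 0) by rewrite !c2D E.
  by move/finj => [].
exact: (Bijective (inj_can_sym hK ginj) hK).
Qed.

Lemma mu_compat r m s :
  mu (ract (lact r m) s) = ract (lact (rho r) (mu m)) (sig s).
Proof.
have := congr1 (@e21 _ _ _ _)
  (fmul (mc_mul (MC r 0 0 0) (MC 0 m 0 0)) (MC 0 0 0 s)).
rewrite c2F21 fmul /mc_mul /= c2A c2B c2C /= !simpl0 rho0 sig0 !simpl0.
by move=> ->.
Qed.
Lemma nu_compat s n r :
  nu (ract (lact s n) r) = ract (lact (sig s) (nu n)) (rho r).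
Proof.
have := congr1 (@e12 _ _ _ _)
  (fmul (mc_mul (MC 0 0 0 s) (MC 0 0 n 0)) (MC r 0 0 0)).
rewrite c2F12 fmul /mc_mul /= c2A c2B c2D /= !simpl0 rho0 sig0 !simpl0.
by move=> ->.
Qed.

Lemma case2_iso : Iso01 f.
Proof.
exists rho, sig, mu, nu, a, b.
split; first by split; [exact: rho_bij | split; [exact: rhoD | split; [exact: rhoM | exact: rho1]]].
split; first by split; [exact: sig_bij | split; [exact: sigD | split; [exact: sigM | exact: sig1]]].
do 6 (split; first by [exact: mu_bij | exact: muD | exact: nu_bij | exact: nuD |
   exact: mu_compat | exact: nu_compat]).
exact: c2F.
Qed.
End Case2.

Lemma fwd_iso : only_trivial_idempotents R' -> only_trivial_idempotents S' ->
  Iso00 f \/ Iso01 f.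
Proof.
move=> hR' hS'.
have Eid : mc_mul (MC 1 0 0 0) (MC 1 0 0 0) = (MC 1 0 0 0 : mctx M N).
  by rewrite /mc_mul /= !simpl0.
have := fmul (MC 1 0 0 0) (MC 1 0 0 0); rewrite Eid.
case He: (f (MC 1 0 0 0)) => [a0 a b b0]; rewrite /mc_mul /= => -[h0 h1 h2 h3].
have [a00|a01] := hR' a0 (esym h0); have [b00|b01] := hS' b0 (esym h3).
- rewrite a00 b00 !simpl0 in h1 h2 He; rewrite h1 h2 -f0 in He.
  by move/finj: He => [] /eqP; rewrite oner_eq0.
- by right; rewrite a00 b01 in He; exact: (case2_iso He).
- by left; rewrite a01 b00 in He; exact: (case1_iso He).
- rewrite a01 b01 !simpl0 in h1 h2 He.
  rewrite (dbl0 h1) (dbl0 h2) -[MC 1 0 0 1]/(mc_one M' N') -f1 in He.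
  by move/finj: He => [] /eqP; rewrite eq_sym oner_eq0.
Qed.
End Fwd.

Lemma hA (V : zmodType) (x y : V) : x + y - x = y.
Proof. by rewrite addrC addKr. Qed.
Lemma hB (V : zmodType) (x y : V) : x + (y - x) = y.
Proof. by rewrite addrC subrK. Qed.
Lemma hC (V : zmodType) (a b c a' b' c' : V) :
  (a - b + c) + (a' - b' + c') = (a + a') - (b + b') + (c + c').
Proof. by rewrite opprD [LHS]addrACA [X in X + _ = _]addrACA. Qed.
Lemma hD (V : zmodType) (a b c d e : V) :
  a - d + (c + e) = (a - b + c) + (b - d + e).
Proof. by rewrite [RHS]addrACA (addrA (a - b) b) subrK. Qed.

Lemma hE (V : zmodType) (a b c d e : V) :
  a - d + (e + c) = (b - d + c) + (a - b + e).
Proof. by rewrite [RHS]addrC -hD. Qed.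

Section Bwd.
Variables (R S R' S' : nzRingType) (M : bimod R S) (N : bimod S R)
  (M' : bimod R' S') (N' : bimod S' R').

Lemma bwd00 (phi : mctx M N -> mctx M' N') : Iso00 phi -> mc_ring_iso phi.
Proof.
case=> gam [del [u [v [m0 [n0 [[gb [gD [gM g1]]] [[db [dD [dM d1]]]
  [ub [uD [vb [vD [uc [vc F]]]]]]]]]]]]].
have g0 := addf0 gD; have d0 := addf0 dD; have u0 := addf0 uD; have v0 := addf0 vD.
have ul r m : u (lact r m) = lact (gam r) (u m).
  by have := uc r m 1; rewrite d1 !ract1.
have ur m s : u (ract m s) = ract (u m) (del s).
  by have := uc 1 m s; rewrite g1 !lact1.
have vl s n : v (lact s n) = lact (del s) (v n).
  by have := vc s n 1; rewrite g1 !ract1.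
have vr n r : v (ract n r) = ract (v n) (gam r).
  by have := vc 1 n r; rewrite d1 !lact1.
case: gb => gi gK giK; case: db => di dK diK.
case: ub => ui uK uiK; case: vb => vi vK viK.
split.
  pose h (y : mctx M' N') := MC (gi (e11 y)) (ui (e12 y - (lact (e11 y) m0 - ract m0 (e22 y))))
     (vi (e21 y - (ract n0 (e11 y) - lact (e22 y) n0))) (di (e22 y)) : mctx M N.
  exists h.
    move=> x; rewrite F /h /=; case: x => r m n s /=.
    by rewrite gK dK hA uK hA vK.
  move=> y; rewrite F /h /= giK diK uiK viK.
  by case: y => r m n s /=; rewrite !hB.
split.
  case=> r m n s [r' m' n' s']; rewrite !F /mc_add /=.
  by rewrite gD dD uD vD lactDl ractDr ractDr lactDl !hC.
split.
  case=> r m n s [r' m' n' s']; rewrite !F /mc_mul /=.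
  rewrite gM dM lactA ractA ractA lactA uD vD ul ur vl vr.
  rewrite !lactDr !lactNr !ractDl !ractNl !lractA.
  by rewrite (hD _ (lact (gam r) (ract m0 (del s')))) (hD _ (lact (del s) (ract n0 (gam r')))).
rewrite F /= g1 d1 u0 v0 lact1 ract1 lact1 ract1 !subrr !addr0.
by [].
Qed.

Lemma bwd01 (phi : mctx M N -> mctx M' N') : Iso01 phi -> mc_ring_iso phi.
Proof.
case=> rh [sg [mu [nu [ms [ns [[rb [rD [rM r1]]] [[sb [sD [sM s1]]]
  [mb [mD [nb [nD [mc [nc F]]]]]]]]]]]]].
have r0 := addf0 rD; have s0 := addf0 sD; have mu0 := addf0 mD; have nu0 := addf0 nD.
have ml r m : mu (lact r m) = lact (rh r) (mu m).
  by have := mc r m 1; rewrite s1 !ract1.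
have mr m s : mu (ract m s) = ract (mu m) (sg s).
  by have := mc 1 m s; rewrite r1 !lact1.
have nl s n : nu (lact s n) = lact (sg s) (nu n).
  by have := nc s n 1; rewrite r1 !ract1.
have nr n r : nu (ract n r) = ract (nu n) (rh r).
  by have := nc 1 n r; rewrite s1 !lact1.
case: rb => ri rK riK; case: sb => si sK siK.
case: mb => mi mK miK; case: nb => ni nK niK.
split.
  pose h (y : mctx M' N') := MC (ri (e22 y)) (mi (e21 y - (lact (e22 y) ns - ract ns (e11 y))))
     (ni (e12 y - (ract ms (e22 y) - lact (e11 y) ms))) (si (e11 y)) : mctx M N.
  exists h.
    move=> x; rewrite F /h /=; case: x => r m n s /=.
    by rewrite rK sK hA mK hA nK.
  move=> y; rewrite F /h /= riK siK miK niK.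
  by case: y => r m n s /=; rewrite !hB.
split.
  case=> r m n s [r' m' n' s']; rewrite !F /mc_add /=.
  by rewrite rD sD mD nD lactDl ractDr ractDr lactDl !hC.
split.
  case=> r m n s [r' m' n' s']; rewrite !F /mc_mul /=.
  rewrite rM sM lactA ractA ractA lactA mD nD ml mr nl nr.
  rewrite !lactDr !lactNr !ractDl !ractNl !lractA.
  by rewrite (hE _ (lact (sg s) (ract ms (rh r')))) (hE _ (lact (rh r) (ract ns (sg s')))).
rewrite F /= r1 s1 mu0 nu0 lact1 ract1 lact1 ract1 !subrr !addr0.
by [].
Qed.
End Bwd.

Theorem theorem4p7 (R S R' S' : nzRingType)
  (M : bimod R S) (N : bimod S R) (M' : bimod R' S') (N' : bimod S' R')
  (hR : only_trivial_idempotents R) (hS : only_trivial_idempotents S)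
  (hR' : only_trivial_idempotents R') (hS' : only_trivial_idempotents S')
  (phi : mctx M N -> mctx M' N') :
  mc_ring_iso phi <-> (Iso00 phi \/ Iso01 phi).
Proof.
split.
  move=> [[g fK gK] [fadd [fmul f1]]].
  exact: (fwd_iso fK gK fadd fmul f1 hR' hS').
by case=> [/bwd00|/bwd01].
Qed.
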